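(* Let $(M,\cdot,1)$ be an arbitrary monoid, $\Sigma$ a finite alphabet, and $\ell:\Sigma^*\to M$ an $M$-language. The following two conditions are equivalent: (i) $\ell$ is a recognizable $M$-language; (ii) there exists a factorization $(g,f)$ on $L$ such that the right congruence $\equiv^{(g,f)}_{f(\ell)}$ on $\Sigma^*$ has finite index.
   Context: $\Sigma^*$ is the free monoid of finite words over $\Sigma$, with empty word $\varepsilon$. An $M$-language is a total function $\ell:\Sigma^*\to M$; $L$ denotes the set of all $M$-languages. For $m\in M$, $\ell\in L$, $m\cdot\ell\in L$ is defined by $(m\cdot\ell)(\gamma)=m\cdot\ell(\gamma)$. Let $F$ be the set of all functions $L\to L$ (with $f_e$ the identity) and $G$ the set of all functions $L\to M$. A factorization on $L$ is a pair $(g,f)\in G\times F$ with $g(\ell)\cdot f(\ell)=\ell$ for every $\ell\in L$. For a word $\alpha$, $\Delta_\alpha\in F$ is defined by $\Delta_\alpha(\ell)(\gamma)=\ell(\alpha\gamma)$. Given a factorization $(g,f)$, define $S^{(g,f)}_\alpha\in F$ for $\alpha\in\Sigma^*$ recursively by $S^{(g,f)}_\varepsilon=f_e$ and $S^{(g,f)}_{\alpha\sigma}=f\circ\Delta_\sigma\circ S^{(g,f)}_\alpha$ for $\sigma\in\Sigma$. For $\ell\in L$, the relation $\equiv^{(g,f)}_\ell$ on $\Sigma^*$ is $\alpha\equiv^{(g,f)}_\ell\beta\iff S^{(g,f)}_\alpha(\ell)=S^{(g,f)}_\beta(\ell)$; it is a right congruence, and it has finite index if it has finitely many equivalence classes.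 An $M$-DFA is a tuple $A=(Q,\Sigma,u,i_u,\delta,w,\rho)$ with $Q$ a finite nonempty set of states, $u\in Q$ the initial state, $i_u\in M$ the initial value, $\delta:Q\times\Sigma\to Q$ the state-transition function, $w:Q\times\Sigma\to M$ the monoid-transition function and $\rho:Q\to M$ the final function. Extend $\delta$ to $\Sigma^*$ by $q\varepsilon=q$, $q(\alpha\sigma)=\delta(q\alpha,\sigma)$ (writing $q\alpha$ for the extended $\delta(q,\alpha)$), and $w$ by $w^*(q,\varepsilon)=1$, $w^*(q,\alpha\sigma)=w^*(q,\alpha)\cdot w(q\alpha,\sigma)$. The $M$-language recognized by $A$ is $\mathcal{A}(\alpha)=i_u\cdot w^*(u,\alpha)\cdot\rho(u\alpha)$. An $M$-language is recognizable if it is recognized by some $M$-DFA. *)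

(* Defs.v *)
From mathcomp Require Import all_boot.
Set Implicit Arguments. Unset Strict Implicit. Unset Printing Implicit Defensive.

Section MLang.
Variables (M : Type) (one : M) (mul : Monoid.law one) (Sigma : finType).

Definition word := seq Sigma.
Definition mlang := word -> M.

Definition lscale (m : M) (l : mlang) : mlang := fun g => mul m (l g).

(* (g,f) is a factorization on L: g(l) . f(l) = l for every l
   (equality of languages, i.e. of functions, read pointwise) *)
Definition factorization (g : mlang -> M) (f : mlang -> mlang) : Prop :=
  forall l : mlang, forall gam : word, lscale (g l) (f l) gam = l gam.

Definition Delta (alpha : word) (l : mlang) : mlang := fun gam => l (alpha ++ gam).

(* S_eps = id, S_{alpha sigma} = f o Delta_sigma o S_alpha *)
Definition S (f : mlang -> mlang) (alpha : word) (l : mlang) : mlang :=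
  foldl (fun l' s => f (Delta [:: s] l')) l alpha.

Definition congr_rel (f : mlang -> mlang) (l : mlang) (alpha beta : word) : Prop :=
  forall gam : word, S f alpha l gam = S f beta l gam.

Definition finite_index (R : word -> word -> Prop) : Prop :=
  exists reps : seq word, forall alpha : word, exists2 beta, beta \in reps & R alpha beta.

(* M-DFA; Q finite and nonempty (it contains u) *)
Record MDFA := {
  mdfa_Q : finType;
  mdfa_u : mdfa_Q;
  mdfa_iu : M;
  mdfa_delta : mdfa_Q -> Sigma -> mdfa_Q;
  mdfa_w : mdfa_Q -> Sigma -> M;
  mdfa_rho : mdfa_Q -> M }.

Definition dstar (A : MDFA) (q : mdfa_Q A) (alpha : word) : mdfa_Q A :=
  foldl (@mdfa_delta A) q alpha.

(* w*(q,eps) = 1, w*(q, alpha sigma) = w*(q,alpha) . w(q alpha, sigma) *)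
Definition wstar (A : MDFA) (q : mdfa_Q A) (alpha : word) : M :=
  (foldl (fun pm s => (@mdfa_delta A pm.1 s, mul pm.2 (@mdfa_w A pm.1 s)))
         (q, one) alpha).2.

Definition mdfa_lang (A : MDFA) : mlang := fun alpha =>
  mul (mul (@mdfa_iu A) (@wstar A (@mdfa_u A) alpha))
      (@mdfa_rho A (@dstar A (@mdfa_u A) alpha)).

Definition recognizable (l : mlang) : Prop :=
  exists A : MDFA, forall alpha : word, mdfa_lang A alpha = l alpha.

End MLang.

(* Main.v *)
From Stdlib Require Import ClassicalEpsilon.
Require Import Defs.
From mathcomp Require Import all_boot.
Import Monoid.Theory.



Section Proofs.
Variables (M : Type) (one : M) (mul : Monoid.law one) (Sigma : finType).

Lemma wstar_gen (A : MDFA M Sigma) (q : mdfa_Q A) (m : M) (gam : word Sigma) :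
  foldl (fun pm s => (@mdfa_delta _ _ A pm.1 s, mul pm.2 (@mdfa_w _ _ A pm.1 s)))
        (q, m) gam = (dstar (A:=A) q gam, mul m (wstar mul (A:=A) q gam)).
Proof.
elim: gam q m => [|s gam IH] q m /=; first by rewrite /dstar /wstar /= mulm1.
by rewrite IH /wstar /= IH /= !mul1m IH /= mulmA. Qed.

Definition Lq (A : MDFA M Sigma) (q : mdfa_Q A) : mlang M Sigma :=
  fun gam => mul (wstar mul (A:=A) q gam) (@mdfa_rho _ _ A (dstar (A:=A) q gam)).

Lemma Lq_cons (A : MDFA M Sigma) q s gam :
  Lq A q (s :: gam) = mul (@mdfa_w _ _ A q s) (Lq A (@mdfa_delta _ _ A q s) gam).
Proof.
rewrite /Lq {1}/wstar /= wstar_gen /= mul1m -mulmA; done.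
Qed.

Section Dir1.
Variable (A : MDFA M Sigma).

Definition Pmq (l' : mlang M Sigma) :=
  exists p : M * mdfa_Q A, forall gam, l' gam = mul p.1 (Lq A p.2 gam).

Definition choose_mq (l' : mlang M Sigma) : option (M * mdfa_Q A) :=
  match excluded_middle_informative (Pmq l') with
  | left H => Some (proj1_sig (constructive_indefinite_description _ H))
  | right _ => None end.

Lemma choose_mqP l' :
  (exists p, choose_mq l' = Some p /\ forall gam, l' gam = mul p.1 (Lq A p.2 gam))
  \/ (choose_mq l' = None /\ ~ Pmq l').
Proof.
rewrite /choose_mq; case: excluded_middle_informative => H.
  left; exists (proj1_sig (constructive_indefinite_description _ H)); split => //.
  exact: (proj2_sig (constructive_indefinite_description _ H)).
by right.
Qed.

Definition f1 (l' : mlang M Sigma) : mlang M Sigma :=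
  match choose_mq l' with Some p => Lq A p.2 | None => l' end.
Definition g1 (l' : mlang M Sigma) : M :=
  match choose_mq l' with Some p => p.1 | None => one end.

Lemma fact1 : factorization mul g1 f1.
Proof.
move=> l' gam; rewrite /lscale /g1 /f1.
case: (choose_mqP l') => [[p [-> Hp]]|[-> _]]; last by rewrite mul1m.
by rewrite Hp.
Qed.

Lemma f1_P l' : Pmq l' -> exists q, f1 l' = Lq A q.
Proof.
move=> H; rewrite /f1; case: (choose_mqP l') => [[p [-> _]]|[_ H']].
  by exists p.2.
by case: H'.
Qed.

Lemma S_inv l : (forall alpha, mdfa_lang mul A alpha = l alpha) ->
  forall alpha, exists q, S f1 alpha (f1 l) = Lq A q.
Proof.
move=> Hl alpha; elim/last_ind: alpha => [|alpha s [q Hq]].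
  rewrite /S /=; apply: f1_P; exists (@mdfa_iu _ _ A, @mdfa_u _ _ A) => gam /=.
  by rewrite -Hl /mdfa_lang /Lq mulmA.
rewrite /S foldl_rcons -/(S f1 alpha (f1 l)) Hq; apply: f1_P.
exists (@mdfa_w _ _ A q s, @mdfa_delta _ _ A q s) => gam /=.
by rewrite /Delta /= Lq_cons.
Qed.

End Dir1.

Lemma dir1 l : recognizable mul l ->
  exists (g : mlang M Sigma -> M) (f : mlang M Sigma -> mlang M Sigma),
    factorization mul g f /\ finite_index (congr_rel f (f l)).
Proof.
move=> [A HA]; exists (g1 A), (f1 A); split; first exact: fact1.
pose pk (q : mdfa_Q A) : word Sigma :=
  match excluded_middle_informative (exists a, S (f1 A) a (f1 A l) = Lq A q) with
  | left H => proj1_sig (constructive_indefinite_description _ H)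
  | right _ => [::] end.
exists (map pk (enum (mdfa_Q A))) => alpha.
have [q Hq] := S_inv A l HA alpha.
exists (pk q); first by rewrite map_f // mem_enum.
move=> gam; rewrite Hq /pk; case: excluded_middle_informative => H.
  by rewrite (proj2_sig (constructive_indefinite_description _ H)).
by case: H; exists alpha.
Qed.

Section Dir2.
Variables (g : mlang M Sigma -> M) (f : mlang M Sigma -> mlang M Sigma) (l : mlang M Sigma).
Hypothesis Hfac : factorization mul g f.
Variable reps : seq (word Sigma).
Variable h : word Sigma -> word Sigma.
Hypothesis hP : forall a, h a \in reps.
Hypothesis hR : forall a, congr_rel f (f l) a (h a).

Definition idx (a : word Sigma) : 'I_(size reps) :=
  Ordinal (eq_ind_r is_true (hP a) (index_mem (h a) reps)).

Definition K (i : 'I_(size reps)) := S f (nth [::] reps i) (f l).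

Lemma K_idx a gam : K (idx a) gam = S f a (f l) gam.
Proof. by rewrite /K /= (nth_index _ (hP a)) (hR a gam). Qed.

Definition dfa : MDFA M Sigma :=
  @Build_MDFA M Sigma (ordinal (size reps)) (idx [::]) (g l)
    (fun i s => idx (rcons (nth [::] reps i) s))
    (fun i s => g (Delta [:: s] (K i)))
    (fun i => K i [::]).

Lemma K_run (i : 'I_(size reps)) gam : K i gam = Lq dfa i gam.
Proof.
elim: gam i => [|s gam IH] i; first by rewrite /Lq /wstar /dstar /= mul1m.
rewrite Lq_cons -IH K_idx /S foldl_rcons -/(S f (nth [::] reps i) (f l)) -/(K i).
by rewrite -[K i (s :: gam)]/(Delta [:: s] (K i) gam) -Hfac.
Qed.

Lemma dir2_rec : recognizable mul l.
Proof.
exists dfa => alpha; rewrite /mdfa_lang -mulmA; change (mul (g l) (Lq dfa (idx [::]) alpha) = l alpha).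
rewrite -K_run K_idx /=.
exact: Hfac l alpha.
Qed.
End Dir2.

End Proofs.

Theorem theorem1 (M : Type) (one : M) (mul : Monoid.law one) (Sigma : finType)
    (l : seq Sigma -> M) :
  recognizable mul l <->
  exists (g : mlang M Sigma -> M) (f : mlang M Sigma -> mlang M Sigma),
    factorization mul g f /\ finite_index (congr_rel f (f l)).
Proof.
split; first exact: dir1.
move=> [g [f [Hfac [reps Hreps]]]].
have E : forall a, exists b, b \in reps /\ congr_rel f (f l) a b.
  by move=> a; case: (Hreps a) => b H1 H2; exists b.
pose h a := proj1_sig (constructive_indefinite_description _ (E a)).
have hP : forall a, h a \in reps.
  by move=> a; rewrite /h; case: constructive_indefinite_description => b [].
have hR : forall a, congr_rel f (f l) a (h a).
  by move=> a; rewrite /h; case: constructive_indefinite_description => b [].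
exact: (@dir2_rec M one mul Sigma g f l Hfac reps h hP hR).
Qed.
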